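(* Let $R$, $a$, $t$, $t_i$, $H_i$ and the polynomials $q_{\mu,i}$, $z_{\mu,i}$, $\sigma_{\mu,i}$ be as in the context, let $I=\langle t_1(X_1),\dots,t_r(X_r)\rangle\lhd R[X_1,\dots,X_r]$, and for $\mu\in H_1\times\dots\times H_r$ let $$h_\mu=\prod_{i=1}^r\frac{t_i(X_i)}{q_{\mu,i}(X_i)}\prod_{i=2}^r\sigma_{\mu,i},\qquad I_\mu=\langle q_{\mu,1},z_{\mu,2},\dots,z_{\mu,r}\rangle .$$ Then the annihilator of the ideal $\langle h_\mu+I\rangle$ in $R[X_1,\dots,X_r]/I$ is $(I_\mu+I)/I$.
   Context: $R$ is a finite commutative chain ring (finite commutative local ring whose ideals are totally ordered) with maximal ideal $M=\langle a\rangle$, $a$ of nilpotency index $t$, residue field $\mathbb F_q$; reduction mod $M$ is denoted $r\mapsto \bar r$ and extended coefficientwise to polynomials. $\mathbb F$ is an algebraic closure of $\mathbb F_q$. For $i=1,\dots,r$, $t_i(X_i)\in R[X_i]$ is monic with $\bar t_i$ square-free, and $H_i\subseteq\mathbb F$ is the set of roots of $\bar t_i$. For $\mu=(\mu_1,\dots,\mu_r)\in H_1\times\dots\times H_r$: $p_{\mu,i}$ is the minimal polynomial of $\mu_i$ over $\mathbb F_q$; for $i\ge2$, $w_{\mu,i}$ is the minimal polynomial of $\mu_i$ over $\mathbb F_q(\mu_1,\dots,\mu_{i-1})$ and $\pi_{\mu,i}=p_{\mu,i}/w_{\mu,i}$. $q_{\mu,i}\in R[X_i]$ is the unique monic factor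 of $t_i$ with $\bar q_{\mu,i}=p_{\mu,i}$ (Hensel's lemma). With $R_{i-1}=R[X_1,\dots,X_{i-1}]/\langle q_{\mu,1},z_{\mu,2},\dots,z_{\mu,i-1}\rangle$ (a local ring with residue field $\mathbb F_q(\mu_1,\dots,\mu_{i-1})$), Hensel's lemma gives a factorization $q_{\mu,i}=z_{\mu,i}\sigma_{\mu,i}$ in $R_{i-1}[X_i]$ into monic coprime factors reducing to $w_{\mu,i}$ and $\pi_{\mu,i}$; $z_{\mu,i},\sigma_{\mu,i}$ are regarded as polynomials in $R[X_1,\dots,X_i]$ by replacing the images of $X_j$ in $R_{i-1}$ by $X_j$. *)

(* Defs.v *)
From HB Require Import structures.
From mathcomp Require Import all_boot all_order all_algebra all_field.
From mathcomp Require Import mpoly.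

Set Implicit Arguments.
Unset Strict Implicit.
Unset Printing Implicit Defensive.

Import GRing.Theory.
Local Open Scope ring_scope.

Definition is_ideal (R : finComUnitRingType) (S : {set R}) : Prop :=
  [/\ 0 \in S,
      (forall x y, x \in S -> y \in S -> x + y \in S) &
      (forall c x, x \in S -> c * x \in S)].

(* Local ring: the non-units form an ideal (equivalently a unique maximal ideal). *)
Definition local_ring (R : finComUnitRingType) : Prop :=
  forall x y : R, x \isn't a GRing.unit -> y \isn't a GRing.unit ->
    x + y \isn't a GRing.unit.

Definition chain_ring (R : finComUnitRingType) : Prop :=
  local_ring R /\
  forall S T : {set R}, is_ideal S -> is_ideal T -> S \subset T \/ T \subset S.

Definition squarefree (k : fieldType) (p : {poly k}) : Prop :=
  p != 0 /\ forall d : {poly k}, (d * d %| p)%R -> (size d <= 1)%N.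

Definition liftX (R : comNzRingType) (r : nat) (i : 'I_r) (p : {poly R})
  : {mpoly R[r]} := (map_poly (@mpolyC r R) p).['X_i].

Definition in_ideal (A : comNzRingType) (I : finType) (P : pred I)
  (g : I -> A) (x : A) : Prop :=
  exists c : I -> A, x = \sum_(j | P j) c j * g j.

(* the multivariate polynomial P only involves variables X_j with j < i
   (0-based indices), i.e. P lies in R[X_0, ..., X_(i-1)]. *)
Definition vars_lt (R : comNzRingType) (r : nat) (i : nat) (P : {mpoly R[r]})
  : Prop :=
  forall m, m \in msupp P -> forall j : 'I_r, (i <= j)%N -> m j = 0%N.

(* Congruence P = Q in the ring R[X_0..X_(i-1)] / <g j | j < i>, for P, Q in
   R[X_0..X_(i-1)] (coefficients of the ideal combination also taken in
   R[X_0..X_(i-1)]). *)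
Definition congr_lt (R : comNzRingType) (r : nat) (i : nat)
  (g : 'I_r -> {mpoly R[r]}) (P Q : {mpoly R[r]}) : Prop :=
  exists c : 'I_r -> {mpoly R[r]},
    (forall j, vars_lt i (c j)) /\ P - Q = \sum_(j : 'I_r | (j < i)%N) c j * g j.

(* coefficientwise version, for polynomials in X_i over R[X_0..X_(i-1)] *)
Definition pcongr_lt (R : comNzRingType) (r : nat) (i : nat)
  (g : 'I_r -> {mpoly R[r]}) (P Q : {poly {mpoly R[r]}}) : Prop :=
  forall n : nat, congr_lt i g P`_n Q`_n.

Definition pvars_lt (R : comNzRingType) (r : nat) (i : nat)
  (P : {poly {mpoly R[r]}}) : Prop := forall n : nat, vars_lt i P`_n.

(* The residue map R[X_0..X_(r-1)] -> F: reduce coefficients mod M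
   (via red : R -> k, then k -> F) and evaluate X_j at mu_j. *)
Definition resmap (R : comNzRingType) (k : fieldType) (F : fieldExtType k)
  (red : R -> k) (r : nat) (mu : 'I_r -> F) (P : {mpoly R[r]}) : F :=
  (map_mpoly (fun c => in_alg F (red c)) P).@[mu].

(* Generators of I_mu (0-based): q_{mu,1}(X_1) for index 0, and
   z_{mu,i+1} (as a polynomial in X_0..X_i) for index i >= 1. *)
Definition gens (R : comNzRingType) (r : nat) (q : 'I_r -> {poly R})
  (z : 'I_r -> {poly {mpoly R[r]}}) (j : 'I_r) : {mpoly R[r]} :=
  if val j == 0%N then liftX j (q j) else (z j).['X_j].

Definition mu_before (F : Type) (r : nat) (mu : 'I_r -> F) (i : nat) : seq F :=
  [seq mu j | j <- [seq j <- enum 'I_r | (val j < i)%N]].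

(* Main.v *)
Require Import Defs.
From HB Require Import structures.
From mathcomp Require Import all_boot all_order all_algebra all_field.
From mathcomp Require Import mpoly.

Import GRing.Theory.
Local Open Scope ring_scope.

Module Helpers.
Set Implicit Arguments.
Unset Strict Implicit.
Import GRing.Theory.
Local Open Scope ring_scope.

Section Ideal.
Variables (A : comNzRingType) (I : finType) (P : pred I) (g : I -> A).

Lemma ii0 : in_ideal P g 0.
Proof. by exists (fun _ => 0); rewrite big1 // => j _; rewrite mul0r. Qed.

Lemma iiD x y : in_ideal P g x -> in_ideal P g y -> in_ideal P g (x + y).
Proof.
move=> [c ->] [d ->]; exists (fun j => c j + d j).
by rewrite -big_split /=; apply: eq_bigr => j _; rewrite mulrDl.
Qed.

Lemma iiMl y x : in_ideal P g x -> in_ideal P g (y * x).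
Proof.
move=> [c ->]; exists (fun j => y * c j).
by rewrite mulr_sumr; apply: eq_bigr => j _; rewrite mulrA.
Qed.

Lemma iiMr y x : in_ideal P g x -> in_ideal P g (x * y).
Proof. by move=> H; rewrite mulrC; apply: iiMl. Qed.

Lemma iiN x : in_ideal P g x -> in_ideal P g (- x).
Proof. by move=> H; rewrite -mulN1r; apply: iiMl. Qed.

Lemma iiB x y : in_ideal P g x -> in_ideal P g y -> in_ideal P g (x - y).
Proof. by move=> Hx Hy; apply: iiD => //; apply: iiN. Qed.

Lemma iisum (J : Type) (s : seq J) (Q : pred J) (F : J -> A) :
  (forall j, Q j -> in_ideal P g (F j)) -> in_ideal P g (\sum_(j <- s | Q j) F j).
Proof. by move=> H; apply: (big_ind (in_ideal P g)) => //; [apply: ii0 | apply: iiD]. Qed.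

Lemma iigen j : P j -> in_ideal P g (g j).
Proof.
move=> Pj; exists (fun i => if i == j then 1 else 0).
rewrite (bigD1 j) //= eqxx mul1r big1 ?addr0 // => i /andP [_ /negbTE ->].
by rewrite mul0r.
Qed.

End Ideal.

Lemma iiT (A : comNzRingType) (I : finType) (P : pred I) (g : I -> A) x :
  in_ideal P g x -> in_ideal predT g x.
Proof.
move=> [c ->]; exists (fun j => if P j then c j else 0).
rewrite [RHS](bigID P) /= [X in _ + X]big1 ?addr0.
  by apply: eq_big => // j; case: (P j).
by move=> j /negbTE ->; rewrite mul0r.
Qed.

Lemma pcongr_horner (R : comNzRingType) (r i : nat) (g : 'I_r -> {mpoly R[r]})
  (P Q : {poly {mpoly R[r]}}) (x : {mpoly R[r]}) :
  pcongr_lt i g P Q -> in_ideal (fun j : 'I_r => (j < i)%N) g (P.[x] - Q.[x]).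
Proof.
move=> H; have -> : P.[x] - Q.[x] = (P - Q).[x] by rewrite hornerD hornerN.
rewrite horner_coef; apply: iisum => n _.
apply: iiMr; rewrite coefB; have [c [_ ->]] := H n.
by exists c.
Qed.

Arguments pcongr_horner {R r i g P Q} x.

Set Implicit Arguments.
Unset Strict Implicit.
Import GRing.Theory.


Definition nilp (A : comNzRingType) (x : A) := exists n, x ^+ n = 0.

Lemma nilpD (A : comNzRingType) (x y : A) : nilp x -> nilp y -> nilp (x + y).
Proof.
move=> [a Ha] [b Hb]; exists (a + b)%N; rewrite exprDn big1 // => [[i /= Hi]] _.
case: (leqP b i) => Hbi.
  by rewrite -(subnKC Hbi) exprD Hb mul0r mulr0 mul0rn.
have Hai : (a <= a + b - i)%N by rewrite -addnBA ?leq_addr // ltnW.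
by rewrite -(subnKC Hai) exprD Ha !mul0r mul0rn.
Qed.

Lemma nilp0 (A : comNzRingType) : nilp (0 : A).
Proof. by exists 1%N; rewrite expr1. Qed.

Section Local.
Variables (R : finComUnitRingType) (HR : chain_ring R) (k : fieldType)
  (red : {rmorphism R -> k}).

Lemma nil_aux (x : R) a b : (a < b)%N -> x \isn't a GRing.unit ->
  x ^+ a = x ^+ b -> x ^+ a = 0.
Proof.
move=> ab xNU Hab; set y := x ^+ (b - a).
have Hb : x ^+ b = x ^+ a * y by rewrite /y -exprD subnKC // ltnW.
have H0 : x ^+ a * (1 - y) = 0 by rewrite mulrBr mulr1 -Hb Hab subrr.
have Uy : (1 - y) \is a GRing.unit.
  apply/negPn/negP => NU.
  have yNU : y \isn't a GRing.unit by rewrite /y unitrX_pos ?subn_gt0.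
  have := HR.1 _ _ NU yNU; by rewrite subrK unitr1.
by rewrite -(mulrK Uy (x ^+ a)) H0 mul0r.
Qed.

Lemma nil_red (x : R) : red x = 0 -> nilp x.
Proof.
move=> rx.
have xNU : x \isn't a GRing.unit.
  apply/negP => /(rmorph_unit red); by rewrite rx unitr0.
pose f := fun i : 'I_(#|R|.+1) => x ^+ i.
have : ~~ injectiveb f.
  apply/negP => /injectiveP inj; have := @leq_card _ _ f inj; by rewrite card_ord ltnn.
case/injectivePn => a [b] neq fab.
case: (ltngtP a b) => [ab|ba|ab]; last by move: neq; rewrite -val_eqE /= ab eqxx.
  by exists a; apply: (nil_aux ab xNU fab).
by exists b; apply: (nil_aux ba xNU (esym fab)).
Qed.

Lemma nilp_poly (p : {poly R}) : map_poly red p = 0 -> nilp p.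
Proof.
move=> Hp; rewrite -(coefK p) poly_def.
apply: (big_ind (@nilp {poly R})); [exact: nilp0 | exact: nilpD |] => i _.
have : red p`_i = 0 by rewrite -coef_map Hp coef0.
move=> /nil_red [n Hn]; exists n; by rewrite exprZn Hn scale0r.
Qed.

Lemma lift_exists (u : {poly k}) : (forall y : k, exists x : R, red x = y) ->
  exists U : {poly R}, map_poly red U = u.
Proof.
move=> Hred.
pose lf (y : k) : R := odflt 0 [pick x | red x == y].
have lfP y : red (lf y) = y.
  rewrite /lf; case: pickP => [x /eqP //|H]; have [x Hx] := Hred y.
  by move: (H x); rewrite Hx eqxx.
exists (\poly_(i < size u) lf u`_i); apply/polyP => i.
rewrite coef_map coef_poly; case: ltnP => Hi /=; first by rewrite lfP.
by rewrite rmorph0 nth_default.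
Qed.

Lemma coprime_lift (a b : {poly R}) : (forall y : k, exists x : R, red x = y) ->
  coprimep (map_poly red a) (map_poly red b) ->
  exists U V : {poly R}, U * a + V * b = 1.
Proof.
move=> Hred /Bezout_eq1_coprimepP [[u v] /= Huv].
have [U0 HU] := lift_exists u Hred; have [V0 HV] := lift_exists v Hred.
set m := 1 - (U0 * a + V0 * b).
have Hm : map_poly red m = 0.
  rewrite /m rmorphB rmorph1 rmorphD !rmorphM /=; subst u v; by rewrite Huv subrr.
have [n Hn] := nilp_poly Hm.
have E := subrX1 m n; rewrite Hn sub0r in E.
exists ((\sum_(i < n) m ^+ i) * U0), ((\sum_(i < n) m ^+ i) * V0).
rewrite -!mulrA -mulrDr mulrC.
have -> : U0 * a + V0 * b = 1 - m by rewrite /m opprB addrCA subrr addr0.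
by rewrite mulrC -opprB mulrN mulrC -E opprK.
Qed.

Lemma sqf_coprime (a b : {poly R}) :
  squarefree (map_poly red (a * b)) ->
  coprimep (map_poly red a) (map_poly red b).
Proof.
rewrite rmorphM /=; set A := map_poly red a; set B := map_poly red b.
move=> [nz H]; rewrite coprimep_def.
set d := gcdp A B.
have dd : (d * d %| A * B)%R by rewrite dvdp_mul ?dvdp_gcdl ?dvdp_gcdr.
have := H d dd; rewrite leq_eqVlt ltnS leqn0 size_poly_eq0 gcdp_eq0.
case/orP => // /andP [/eqP A0 _]; by move: nz; rewrite A0 mul0r eqxx.
Qed.

End Local.

End Helpers.
Import Helpers.



Lemma liftXM (R : comNzRingType) (r : nat) (i : 'I_r) (p q : {poly R}) :
  liftX i (p * q) = liftX i p * liftX i q.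
Proof. by rewrite /liftX rmorphM hornerM. Qed.

Theorem mainTheorem2
  (R : finComUnitRingType) (HR : chain_ring R)
  (k : fieldType) (red : {rmorphism R -> k}) (Hred : forall y : k, exists x : R, red x = y)
  (F : fieldExtType k)
  (r : nat) (hr : (0 < r)%N)
  (t : 'I_r -> {poly R})
  (ht_monic : forall i, t i \is monic)
  (ht_sqf : forall i, squarefree (map_poly red (t i)))
  (ht_split : forall i, exists rs : seq F,
      map_poly (fun c => in_alg F (red c)) (t i) = \prod_(x <- rs) ('X - x%:P))
  (mu : 'I_r -> F)
  (hmu : forall i, root (map_poly (fun c => in_alg F (red c)) (t i)) (mu i))
  (q cof : 'I_r -> {poly R})
  (hq_monic : forall i, q i \is monic)
  (hq_fact : forall i, t i = q i * cof i)
  (hq_red : forall i,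
      map_poly (fun c => in_alg F (red c)) (q i) = minPoly 1%VS (mu i))
  (z s : 'I_r -> {poly {mpoly R[r]}})
  (hz_vars : forall i : 'I_r, (0 < i)%N -> pvars_lt i (z i) /\ pvars_lt i (s i))
  (hz_monic : forall i : 'I_r, (0 < i)%N -> z i \is monic /\ s i \is monic)
  (hz_fact : forall i : 'I_r, (0 < i)%N ->
      pcongr_lt i (gens q z) (map_poly (@mpolyC r R) (q i)) (z i * s i))
  (hz_coprime : forall i : 'I_r, (0 < i)%N ->
      exists A B : {poly {mpoly R[r]}}, [/\ pvars_lt i A, pvars_lt i B &
        pcongr_lt i (gens q z) (A * z i + B * s i) 1])
  (hz_red : forall i : 'I_r, (0 < i)%N ->
      map_poly (resmap red mu) (z i) = minPoly <<1%VS & mu_before mu i>>%VS (mu i))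
  (hs_red : forall i : 'I_r, (0 < i)%N ->
      map_poly (resmap red mu) (s i) =
        minPoly 1%VS (mu i) %/ minPoly <<1%VS & mu_before mu i>>%VS (mu i)) :
  let h : {mpoly R[r]} :=
    (\prod_(j : 'I_r) liftX j (cof j)) * \prod_(j : 'I_r | (0 < j)%N) (s j).['X_j] in
  forall f : {mpoly R[r]},
    (forall u : {mpoly R[r]},
        in_ideal predT (fun j : 'I_r => liftX j (t j)) (f * (u * h)))
    <->
    (exists a b : {mpoly R[r]},
        [/\ in_ideal predT (gens q z) a,
            in_ideal predT (fun j : 'I_r => liftX j (t j)) b &
            f = a + b]).
Proof.
move=> h f.
set I := in_ideal predT (fun j : 'I_r => liftX j (t j)).
set J := in_ideal predT (gens q z).
set C := \prod_(j : 'I_r) liftX j (cof j).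
have gensE : forall j : 'I_r, (0 < j)%N -> gens q z j = (z j).['X_j].
  by move=> j j0; rewrite /gens eqn0Ngt j0.
have gens0 : forall j : 'I_r, ~~ (0 < j)%N -> gens q z j = liftX j (q j).
  by move=> j j0; rewrite /gens eqn0Ngt j0.
have zs : forall j : 'I_r, (0 < j)%N -> in_ideal (fun l : 'I_r => (l < j)%N)
    (gens q z) (liftX j (q j) - gens q z j * (s j).['X_j]).
  move=> j j0; have := pcongr_horner 'X_j (hz_fact j j0).
  by rewrite hornerM gensE.
have qJ : forall j, J (liftX j (q j)).
  move=> j; case j0 : (0 < j)%N.
    have -> : liftX j (q j) = (liftX j (q j) - gens q z j * (s j).['X_j])
        + gens q z j * (s j).['X_j] by rewrite subrK.
    apply: iiD; first exact: (iiT (zs j j0)).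
    by apply: iiMr; apply: iigen.
  by rewrite -gens0 ?j0 //; apply: iigen.
have Iqc : forall (j : 'I_r) x, I (liftX j (q j) * (C * x)).
  move=> j x; rewrite /C (bigD1 j) //= mulrA mulrA -liftXM -hq_fact -mulrA.
  by apply: iiMr; apply: iigen.
have CA : forall (n : nat) (j : 'I_r), (j < n)%N ->
    I (gens q z j * (C * \prod_(m : 'I_r | (0 < m)%N && (m <= j)%N) (s m).['X_m])).
  elim=> [|n IH] j // jn.
  case j0 : (0 < j)%N; last by rewrite gens0 ?j0 //; apply: Iqc.
  rewrite (bigD1 j) /=; last by rewrite j0 leqnn.
  rewrite (eq_bigl (fun m : 'I_r => (0 < m)%N && (m < j)%N)); last first.
    move=> m; rewrite -andbA; congr (_ && _).
    by rewrite ltn_neqAle andbC.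
  rewrite [C * _]mulrCA [gens _ _ _ * _]mulrA.
  have [c Hc] := zs j j0.
  have -> : gens q z j * (s j).['X_j] = liftX j (q j) - \sum_(l : 'I_r | (l < j)%N) c l * gens q z l.
    by rewrite -Hc opprB addrC subrK.
  rewrite mulrBl; apply: iiB; first exact: Iqc.
  rewrite big_distrl /=; apply: iisum => l lj.
  rewrite (bigID (fun m : 'I_r => (m <= l)%N)) /=.
  rewrite (eq_bigl (fun m : 'I_r => (0 < m)%N && (m <= l)%N)); last first.
    move=> m; rewrite -andbA; congr (_ && _).
    apply/idP/idP => [/andP [] //|ml]; by rewrite ml (leq_ltn_trans ml lj).
  rewrite -mulrA; apply: iiMl.
  rewrite [C * _]mulrA [gens _ _ _ * _]mulrA; apply: iiMr; apply: IH.
  by apply: (leq_trans lj); rewrite -ltnS.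
have CA' : forall j : 'I_r, I (gens q z j * h).
  move=> j; rewrite /h -/C (bigID (fun m : 'I_r => (m <= j)%N)) /= mulrA mulrA.
  by apply: iiMr; rewrite -mulrA; apply: (CA j.+1).
set U := fun x => exists b, J (1 - b * x).
have Umul : forall x y, U x -> U y -> U (x * y).
  move=> x y [b Hb] [c Hc]; exists (b * c).
  have -> : 1 - b * c * (x * y) = (1 - b * x) + (b * x) * (1 - c * y).
    by rewrite mulrBr mulr1 addrA subrK mulrACA.
  by apply: iiD => //; apply: iiMl.
have U1 : U 1 by exists 1; rewrite mulr1 subrr; apply: ii0.
have Uprod : forall (P : pred 'I_r) (G : 'I_r -> {mpoly R[r]}),
    (forall j, P j -> U (G j)) -> U (\prod_(j | P j) G j).
  move=> P G HF; apply: (big_ind U) => //.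
have Uh : U h.
  apply: Umul; apply: Uprod => j.
    move=> _; have cop : coprimep (map_poly red (q j)) (map_poly red (cof j)).
      by apply: sqf_coprime; rewrite -hq_fact; apply: ht_sqf.
    have [P [Q PQ]] := coprime_lift HR Hred cop.
    exists (liftX j Q); rewrite -liftXM.
    have -> : 1 = liftX j P * liftX j (q j) + liftX j (Q * cof j).
      by rewrite -liftXM -[RHS]hornerD -rmorphD PQ /liftX rmorph1 -polyC1 hornerC.
    by rewrite addrK; apply: iiMl; apply: qJ.
  move=> j0; have [A [B [_ _ Hc]]] := hz_coprime j j0.
  have := iiT (pcongr_horner 'X_j Hc).
  rewrite hornerD !hornerM -polyC1 hornerC -gensE // => HJ.
  exists (B.['X_j]).
  have -> : 1 - B.['X_j] * (s j).['X_j] =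
      A.['X_j] * gens q z j - (A.['X_j] * gens q z j + B.['X_j] * (s j).['X_j] - 1).
    by rewrite !opprD opprK addrA addNKr addrC.
  by apply: iiB => //; apply: iiMl; apply: iigen.
split=> [H|].
  have [b Hb] := Uh.
  have Hfh := H 1; rewrite mul1r in Hfh.
  exists (f * (1 - b * h)), (b * (f * h)); split.
  - by apply: iiMl.
  - by apply: iiMl.
  - by rewrite mulrBr mulr1 mulrCA subrK.
move=> [a [b [[c ->] Hb ->]]] u.
rewrite mulrDl; apply: iiD; last by apply: iiMr.
rewrite big_distrl /=; apply: iisum => j _.
rewrite -mulrA; apply: iiMl; rewrite mulrCA; apply: iiMl; exact: CA'.
Qed.
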